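(* Let $k\ge1$ and $n\neq0$ be integers and $\mathcal K=J(k,2n)$, whose knot group is $G(\mathcal K)=\langle a,b\mid w^na=bw^n\rangle$ with $w=(ba^{-1})^m(b^{-1}a)^m$ if $k=2m$ and $w=(ba^{-1})^mba(b^{-1}a)^m$ if $k=2m+1$. For a representation $\rho:G(\mathcal K)\to\mathrm{SL}_2(\mathbb C)$ of the form $\rho(a)=\begin{bmatrix} M&1\\0&M^{-1}\end{bmatrix}$, $\rho(b)=\begin{bmatrix} M&0\\2-y&M^{-1}\end{bmatrix}$ (so $y=\operatorname{tr}\rho(ab^{-1})$), put $z=\operatorname{tr}\rho(w)$. Then: (1) If $k=2m$, then $S_{m-1}(y)S_{n-1}(z)\neq0$ for every non-abelian representation $\rho$ of this form. (2) If $k=2m+1\ge3$ (in which case $\mathcal K$ is hyperbolic) and $\rho=\rho_0$ is the holonomy representation of $\mathcal K$, conjugated into this form, then $S_m(y)S_{m-1}(y)\neq0$.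
   Context: $J(k,l)$ denotes the double twist knot/link, the rational knot/link corresponding to the continued fraction $-k+\frac1l$. Every non-abelian representation $G(\mathcal K)\to\mathrm{SL}_2(\mathbb C)$ is conjugate to one of the displayed form with $(M,y)\in(\mathbb C\setminus\{0\})\times\mathbb C$. $S_l(v)$, $l\in\mathbb Z$, are the Chebyshev polynomials of the second kind: $S_0=1$, $S_1=v$, $S_l=vS_{l-1}-S_{l-2}$ for all integers $l$. For a hyperbolic knot, the holonomy representation $\rho_0$ is a lift to $\mathrm{SL}_2(\mathbb C)$ of the discrete faithful representation into $\mathrm{PSL}_2(\mathbb C)$ coming from the complete hyperbolic structure of the knot exterior; it is non-abelian with $\operatorname{tr}\rho_0(a)=\pm2$. *)

(* Defs.v *)
From HB Require Import structures.
From mathcomp Require Import all_boot all_order all_algebra.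
From mathcomp Require Import complex.
From mathcomp Require Import reals.
Set Implicit Arguments. Unset Strict Implicit. Unset Printing Implicit Defensive.
Import Order.TTheory GRing.Theory Num.Theory.
Local Open Scope ring_scope.

(* Words in the free group on {a, b}: a letter (g, e) is the generator
   a (g = false) or b (g = true), inverted iff e = true. *)
Definition letter := (bool * bool)%type.
Definition word := seq letter.
Definition la : letter := (false, false).
Definition laI : letter := (false, true).
Definition lb : letter := (true, false).
Definition lbI : letter := (true, true).

Definition winv (u : word) : word := rev [seq (x.1, ~~ x.2) | x <- u].
Definition wrep (j : nat) (u : word) : word := flatten (nseq j u).
Definition wpow (u : word) (n : int) : word :=
  match n with Posz j => wrep j u | Negz j => wrep j.+1 (winv u) end.

Definition wJ (k : nat) : word :=
  let m := k./2 in
  if odd k then wrep m [:: lb; laI] ++ [:: lb; la] ++ wrep m [:: lbI; la]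
  else wrep m [:: lb; laI] ++ wrep m [:: lbI; la].

Definition relL (k : nat) (n : int) : word := wpow (wJ k) n ++ [:: la].
Definition relR (k : nat) (n : int) : word := lb :: wpow (wJ k) n.
Definition relator (k : nat) (n : int) : word :=
  relL k n ++ winv (relR k n).

Definition freduce (u : word) : word :=
  foldr (fun x acc => match acc with
                      | y :: t => if y == (x.1, ~~ x.2) then t else x :: acc
                      | [::] => [:: x] end) [::] u.

Definition in_normal_closure (r u : word) : Prop :=
  exists cs : seq (word * bool),
    freduce u = freduce (flatten [seq c.1 ++ (if c.2 then winv r else r) ++ winv c.1
                                 | c <- cs]).

Section Rep.
Variable R : realType.
Local Notation C := (R[i]).

Definition mx2 (p q r s : C) : 'M[C]_2 :=
  \matrix_(i < 2, j < 2)
    if (i : nat) == 0%N then (if (j : nat) == 0%N then p else q)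
    else (if (j : nat) == 0%N then r else s).

Definition rhoA (M : C) : 'M[C]_2 := mx2 M 1 0 M^-1.
Definition rhoB (M y : C) : 'M[C]_2 := mx2 M 0 (2 - y) M^-1.

Definition ev_letter (M y : C) (x : letter) : 'M[C]_2 :=
  let g := if x.1 then rhoB M y else rhoA M in
  if x.2 then invmx g else g.

Definition ev_word (M y : C) (u : word) : 'M[C]_2 :=
  foldr (fun x acc => ev_letter M y x *m acc) 1%:M u.

Definition is_rep (k : nat) (n : int) (M y : C) : Prop :=
  M != 0 /\ ev_word M y (relL k n) = ev_word M y (relR k n).

Definition non_abelian (M y : C) : Prop :=
  rhoA M *m rhoB M y != rhoB M y *m rhoA M.

Definition discrete_image (M y : C) : Prop :=
  exists e : R, 0 < e /\
    forall u : word,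
      (forall i j : 'I_2, `|ev_word M y u i j - (1%:M : 'M[C]_2) i j| < (e%:C)%C) ->
      ev_word M y u = 1%:M.

(* the induced map G(K) -> PSL_2(C) is injective *)
Definition faithful_PSL (k : nat) (n : int) (M y : C) : Prop :=
  forall u : word,
    ev_word M y u = 1%:M \/ ev_word M y u = - 1%:M ->
    in_normal_closure (relator k n) u.

Definition discrete_faithful (k : nat) (n : int) (M y : C) : Prop :=
  is_rep k n M y /\ discrete_image M y /\ faithful_PSL k n M y.

Fixpoint chebS_nat (l : nat) (v : C) : C :=
  match l with
  | 0 => 1
  | 1 => v
  | (j.+1 as l').+1 => v * chebS_nat l' v - chebS_nat j v
  end.

Definition chebS (l : int) (v : C) : C :=
  match l with
  | Posz j => chebS_nat j v
  | Negz 0 => 0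
  | Negz j.+1 => - chebS_nat j v
  end.

End Rep.

(* Main.v *)
Require Import Defs.
From HB Require Import structures.
From mathcomp Require Import all_boot all_order all_algebra.
From mathcomp Require Import complex reals.
From mathcomp Require Import ring zify.
Import Order.TTheory GRing.Theory Num.Theory.
Local Open Scope ring_scope.
Set Implicit Arguments. Unset Strict Implicit.



Definition gmul (g h : int * int) : int * int := (g.1 * h.1, g.1 * h.2 + g.2).
Definition dl (x : letter) : int * int := (-1, if x.1 then 1 else 0).
Definition dev (u : word) : int * int := foldr (fun x acc => gmul (dl x) acc) (1, 0) u.

Lemma gmulA g h l : gmul g (gmul h l) = gmul (gmul g h) l.
Proof. rewrite /gmul /=; congr pair; ring. Qed.

Lemma dev_cat u v : dev (u ++ v) = gmul (dev u) (dev v).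
Proof.
elim: u => [|x u IH] /=; first by rewrite /gmul /= !mul1r addr0; case: (dev v).
by rewrite IH gmulA.
Qed.

Lemma dl_flip x : dl (x.1, ~~ x.2) = dl x.
Proof. by []. Qed.

Lemma dl_sq x g : gmul (dl x) (gmul (dl x) g) = g.
Proof. case: g => a b; rewrite /gmul /=; congr pair; ring. Qed.

Lemma dev_sq u : (dev u).1 * (dev u).1 = 1.
Proof.
elim: u => [|x u IH] //=.
by rewrite /gmul /= !mulN1r mulrNN IH.
Qed.

Lemma dev_winv_mul u : gmul (dev (winv u)) (dev u) = (1, 0).
Proof.
elim: u => [|x u IH]; first by [].
rewrite /winv /= rev_cons -cats1 dev_cat -/(winv u) /=.
rewrite -gmulA.
have -> : gmul (gmul (dl (x.1, ~~ x.2)) (1, 0)) (gmul (dl x) (dev u)) = dev u.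
  by rewrite dl_flip -gmulA /gmul /=; case: (dev u) => a b /=; congr pair; ring.
exact: IH.
Qed.

Lemma dev_winv u : dev (winv u) = ((dev u).1, - ((dev u).1 * (dev u).2)).
Proof.
have := dev_winv_mul u; have := dev_sq u.
case: (dev (winv u)) => h1 h2; case: (dev u) => g1 g2 /= sq.
rewrite /gmul /= => -[E1 E2].
have H1 : h1 = g1 by rewrite -[h1]mulr1 -sq mulrA E1 mul1r.
subst h1; congr pair.
by apply/eqP; rewrite -subr_eq0 -E2 opprK addrC.
Qed.

Definition fstep (x : letter) (acc : word) : word :=
  match acc with
  | y :: t => if y == (x.1, ~~ x.2) then t else x :: acc
  | [::] => [:: x] end.

Lemma freduce_cons x u : freduce (x :: u) = fstep x (freduce u).
Proof. by []. Qed.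

Lemma dev_freduce u : dev (freduce u) = dev u.
Proof.
elim: u => [|x u IH] //.
rewrite freduce_cons /= -IH /fstep.
case: (freduce u) => [|z t] //=.
case: eqP => [->|] //=.
by rewrite dl_flip dl_sq.
Qed.

Lemma dev_wrep u j t : dev u = (1, t) -> dev (wrep j u) = (1, j%:Z * t).
Proof.
move=> du; elim: j => [|j IH]; first by rewrite mul0r.
rewrite /wrep /= -/(wrep j u) dev_cat du IH /gmul /= mul1r mul1r -addn1 PoszD; congr pair; ring.
Qed.

Lemma dev_wJ k : dev (wJ k) = (1, k%:Z).
Proof.
have Hc : forall (s : word) j, dev s = (1, 1) -> dev (wrep j s) = (1, j%:Z).
  by move=> s j /(dev_wrep j) ->; rewrite mulr1.
have Ek : k%:Z = (odd k)%:Z + 2 * (k./2)%:Z.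
  by rewrite -{1}(odd_double_half k) PoszD -muln2 PoszM mulrC.
rewrite /wJ Ek; case: (odd k).
- rewrite !dev_cat (Hc [:: lb; laI]) // (Hc [:: lbI; la]) // /gmul /=.
  congr pair; ring.
- rewrite !dev_cat (Hc [:: lb; laI]) // (Hc [:: lbI; la]) // /gmul /=.
  congr pair; ring.
Qed.

Lemma dev_wpow k n : dev (wpow (wJ k) n) = (1, n * k%:Z).
Proof.
case: n => j /=.
  by rewrite (@dev_wrep _ _ k) // dev_wJ.
rewrite (@dev_wrep _ _ (- k%:Z)); last by rewrite dev_winv dev_wJ /= !mul1r.
by rewrite NegzE; congr pair; ring.
Qed.

Lemma dev_relator k n : dev (relator k n) = (1, 2 * n * k%:Z - 1).
Proof.
rewrite /relator /relL /relR !dev_cat dev_winv /= dev_wpow /gmul /=.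
congr pair; ring.
Qed.

Lemma dev_normal k n u : in_normal_closure (relator k n) u ->
  exists j : int, dev u = (1, (2 * n * k%:Z - 1) * j).
Proof.
case=> cs E; rewrite -dev_freduce E dev_freduce; clear E.
elim: cs => [|[c b] cs [j IH]]; first by exists 0; rewrite mulr0.
rewrite /= !dev_cat IH.
have Hr : dev (if b then winv (relator k n) else relator k n) =
   (1, (2 * n * k%:Z - 1) * (if b then -1 else 1)).
  case: b; rewrite ?dev_winv dev_relator /=; congr pair; ring.
rewrite Hr dev_winv.
have := dev_sq c; case: (dev c) => g1 g2 /= sq.
exists (g1 * (if b then -1 else 1) + j).
rewrite /gmul /=; congr pair.
- by rewrite mul1r mulr1 sq.
- rewrite mul1r sq mul1r mul1r; set p := 2 * n * k%:Z - 1; set e := (if b then _ else _).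
  have -> : g1 * (- (g1 * g2) + p * e) = - g2 + g1 * (p * e) by rewrite mulrDr mulrN (mulrA g1 g1) sq mul1r.
  ring.
Qed.

Lemma arith_contra : forall (N : nat) (n j : int) (m k : nat), (1 <= m)%N -> n != 0 -> k = (2 * m + 1)%N -> (1 <= N <= m + 1)%N ->
  N%:Z = (2 * n * k%:Z - 1) * j -> False.
Proof.
move=> N n j m k m1 n0 Ek HN E.
have : (n >= 1) \/ (n <= -1) by lia.
have : (j >= 1) \/ (j <= -1) \/ j = 0 by lia.
move=> Hj Hn.
have Hp : 2 * n * k%:Z - 1 >= 2 * k%:Z - 1 \/ 2 * n * k%:Z - 1 <= - 2 * k%:Z - 1.
  case: Hn => Hn; [left|right]; nia.
have [p Ep] : exists p : int, p = 2 * n * k%:Z - 1 by eexists.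
rewrite -Ep in E Hp; clear Ep.
have HN1 : (1 <= N%:Z) by lia.
have HN2 : (N%:Z <= m%:Z + 1) by lia.
have Hk : k%:Z = 2 * m%:Z + 1 by lia.
clear HN Ek n0 Hn.
case: Hp => Hp; case: Hj => [Hj|[Hj|Hj]].
- have : p * j >= p * 1 by apply: ler_wpM2l; lia.
  lia.
- have : p * j <= 0 by apply: mulr_ge0_le0; lia.
  lia.
- subst j; lia.
- have : p * j <= 0 by apply: mulr_le0_ge0; lia.
  lia.
- have : (-p) * (-j) >= (-p) * 1 by apply: ler_wpM2l; lia.
  rewrite mulrNN.
  lia.
- subst j; lia.
Qed.



Section M.
Variable R : realType.
Local Notation C := (R[i]).

Lemma mx2E (p q r s : C) (i j : 'I_2) : mx2 p q r s i j =
  if (i : nat) == 0%N then (if (j : nat) == 0%N then p else q)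
    else (if (j : nat) == 0%N then r else s).
Proof. by rewrite mxE. Qed.

Lemma mx2_eta (X : 'M[C]_2) : X = mx2 (X 0 0) (X 0 1) (X 1 0) (X 1 1).
Proof.
apply/matrixP => i j; rewrite mx2E.
case: i => [[|[|i]] Hi]; case: j => [[|[|j]] Hj] //=;
  by congr (X _ _); apply/val_inj.
Qed.

Lemma mx2_mul p q r s p' q' r' s' :
  mx2 p q r s *m mx2 p' q' r' s' =
  mx2 (p * p' + q * r') (p * q' + q * s') (r * p' + s * r') (r * q' + s * s') :> 'M[C]_2.
Proof.
apply/matrixP => i j; rewrite !mxE !big_ord_recl big_ord0 !mxE /=.
by rewrite addr0; case: i => [[|[|i]] Hi]; case: j => [[|[|j]] Hj].
Qed.

Lemma mx2_scalar (c : C) : c%:M = mx2 c 0 0 c.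
Proof.
apply/matrixP => i j; rewrite !mxE.
by case: i => [[|[|i]] Hi]; case: j => [[|[|j]] Hj].
Qed.

Lemma mx2_scale (a p q r s : C) : a *: mx2 p q r s = mx2 (a * p) (a * q) (a * r) (a * s).
Proof.
apply/matrixP => i j; rewrite !mxE.
by case: i => [[|[|i]] Hi]; case: j => [[|[|j]] Hj].
Qed.

Lemma mx2_add (p q r s p' q' r' s' : C) : mx2 p q r s + mx2 p' q' r' s' = mx2 (p + p') (q + q') (r + r') (s + s').
Proof.
apply/matrixP => i j; rewrite !mxE.
by case: i => [[|[|i]] Hi]; case: j => [[|[|j]] Hj].
Qed.

Lemma mx2_opp (p q r s : C) : - mx2 p q r s = mx2 (-p) (-q) (-r) (-s).
Proof.
apply/matrixP => i j; rewrite !mxE.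
by case: i => [[|[|i]] Hi]; case: j => [[|[|j]] Hj].
Qed.

Lemma mx2_inj (p q r s p' q' r' s' : C) : mx2 p q r s = mx2 p' q' r' s' ->
  [/\ p = p', q = q', r = r' & s = s'].
Proof.
move=> E; split.
- by have := congr1 (fun X : 'M[C]_2 => X 0 0) E; rewrite /= !mxE.
- by have := congr1 (fun X : 'M[C]_2 => X 0 1) E; rewrite /= !mxE.
- by have := congr1 (fun X : 'M[C]_2 => X 1 0) E; rewrite /= !mxE.
- by have := congr1 (fun X : 'M[C]_2 => X 1 1) E; rewrite /= !mxE.
Qed.

Lemma mx2_tr (p q r s : C) : \tr (mx2 p q r s) = p + s.
Proof. by rewrite /mxtrace !big_ord_recl big_ord0 !mxE /= addr0. Qed.

Definition d2 (X : 'M[C]_2) := X 0 0 * X 1 1 - X 0 1 * X 1 0.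

Lemma d2_mx2 (p q r s : C) : d2 (mx2 p q r s) = p * s - q * r.
Proof. by rewrite /d2 !mxE. Qed.

Lemma d2M (X Y : 'M[C]_2) : d2 (X *m Y) = d2 X * d2 Y.
Proof.
rewrite [X]mx2_eta [Y]mx2_eta mx2_mul !d2_mx2; ring.
Qed.

Lemma CH2 (X : 'M[C]_2) : X *m X = \tr X *: X - (d2 X)%:M.
Proof.
rewrite [X]mx2_eta mx2_mul mx2_tr d2_mx2 mx2_scale mx2_scalar mx2_opp mx2_add.
by congr mx2; ring.
Qed.


Lemma d2_scalar (c : C) : d2 c%:M = c * c.
Proof. by rewrite mx2_scalar d2_mx2 mulr0 subr0. Qed.

Lemma d2X (X : 'M[C]_2) j : d2 X = 1 -> d2 (X ^+ j) = 1.
Proof.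
move=> dX; elim: j => [|j IH]; first by rewrite expr0 -idmxE d2_scalar mulr1.
by rewrite exprS -mulmxE d2M dX IH mulr1.
Qed.

Lemma pow2 (X : 'M[C]_2) : d2 X = 1 -> forall j,
  X ^+ j.+2 = chebS_nat j.+1 (\tr X) *: X - (chebS_nat j (\tr X))%:M.
Proof.
move=> dX; elim=> [|j IH].
  by rewrite expr2 -mulmxE CH2 dX.
rewrite (exprS X j.+2) IH mulrBr -!mulmxE mul_mx_scalar -scalemxAr CH2 dX.
rewrite scalerBr scalerA scalemx1 /= scalerBl [_ * \tr X]mulrC.
by rewrite addrAC.
Qed.

Lemma pow2_scalar (X : 'M[C]_2) j : d2 X = 1 -> chebS_nat j.+1 (\tr X) = 0 ->
  X ^+ j.+2 = (- chebS_nat j (\tr X))%:M /\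
  (- chebS_nat j (\tr X)) * (- chebS_nat j (\tr X)) = 1.
Proof.
move=> dX S0.
have E : X ^+ j.+2 = (- chebS_nat j (\tr X))%:M.
  by rewrite pow2 // S0 scale0r sub0r !mx2_scalar mx2_opp oppr0.
split=> //; by rewrite -d2_scalar -E d2X.
Qed.

Lemma ev_cat (M y : C) (u v : word) : ev_word M y (u ++ v) = ev_word M y u *m ev_word M y v.
Proof.
elim: u => [|x u IH] /=; first by rewrite mul1mx.
by rewrite IH mulmxA.
Qed.

Lemma ev_wrep (M y : C) (u : word) j : ev_word M y (wrep j u) = ev_word M y u ^+ j.
Proof.
elim: j => [|j IH]; first by rewrite expr0.
by rewrite exprS -mulmxE -IH -ev_cat.
Qed.

Lemma inv_expl (A B : 'M[C]_2) : A *m B = 1%:M -> invmx A = B.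
Proof.
move=> AB; have [uA _] := mulmx1_unit AB.
by rewrite -[invmx A]mulmx1 -AB mulmxA mulVmx // mul1mx.
Qed.

Lemma invA (M : C) : M != 0 -> invmx (rhoA M) = mx2 M^-1 (-1) 0 M.
Proof.
move=> M0; apply: inv_expl; rewrite /rhoA mx2_mul mx2_scalar.
by congr mx2; field.
Qed.

Lemma invB (M y : C) : M != 0 -> invmx (rhoB M y) = mx2 M^-1 0 (y - 2) M.
Proof.
move=> M0; apply: inv_expl; rewrite /rhoB mx2_mul mx2_scalar.
by congr mx2; field.
Qed.

Lemma ev_letter_inv (M y : C) (x : letter) : M != 0 ->
  ev_letter M y (x.1, ~~ x.2) *m ev_letter M y x = 1%:M.
Proof.
move=> M0; case: x => [[] []]; rewrite /ev_letter /= ?invA ?invB //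
  /rhoA /rhoB mx2_mul mx2_scalar; by congr mx2; field.
Qed.

Lemma ev_winv (M y : C) (u : word) : M != 0 ->
  ev_word M y (winv u) *m ev_word M y u = 1%:M.
Proof.
move=> M0; elim: u => [|x u IH]; first by rewrite /= mul1mx.
rewrite /winv /= rev_cons -cats1 ev_cat -/(winv u) /= mulmx1.
by rewrite -mulmxA [X in _ *m X]mulmxA ev_letter_inv // mul1mx.
Qed.

End M.

Section Main.
Variable R : realType.
Local Notation C := (R[i]).

Lemma Xc_ok (M y : C) : M != 0 ->
  d2 (ev_word M y [:: lb; laI]) = 1 /\ \tr (ev_word M y [:: lb; laI]) = y.
Proof.
move=> M0; rewrite /= /ev_letter /= invA // mulmx1 /rhoB mx2_mul d2_mx2 mx2_tr; by split; field.
Qed.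

Lemma Xd_ok (M y : C) : M != 0 ->
  d2 (ev_word M y [:: lbI; la]) = 1 /\ \tr (ev_word M y [:: lbI; la]) = y.
Proof.
move=> M0; rewrite /= /ev_letter /= invB // mulmx1 /rhoA mx2_mul d2_mx2 mx2_tr; by split; field.
Qed.

Lemma d2_ev (M y : C) u : M != 0 -> d2 (ev_word M y u) = 1.
Proof.
move=> M0; elim: u => [|x u IH] /=; first by rewrite d2_scalar mulr1.
rewrite d2M IH mulr1; case: x => [[] []]; rewrite /ev_letter /= ?invA ?invB //
  /rhoA /rhoB d2_mx2; by field.
Qed.

Lemma inv_ok (V W : 'M[C]_2) : d2 W = 1 -> V *m W = 1%:M ->
  d2 V = 1 /\ \tr V = \tr W.
Proof.
move=> dW VW; split.
  by have := congr1 (@d2 R) VW; rewrite d2M dW mulr1 d2_scalar mulr1.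
have WZ : W *m ((\tr W)%:M - W) = 1%:M.
  by rewrite mulmxBr mul_mx_scalar CH2 dW opprB addrC subrK.
have -> : V = (\tr W)%:M - W by rewrite -[V]mulmx1 -WZ mulmxA VW mul1mx.
rewrite [W]mx2_eta mx2_scalar mx2_opp mx2_add !mx2_tr; ring.
Qed.

Lemma rel_contra k n (M y c : C) : is_rep k n M y -> non_abelian M y ->
  ev_word M y (wpow (wJ k) n) = c%:M -> c * c = 1 -> False.
Proof.
move=> [M0 Hrel] NA E cc.
have c0 : c != 0 by apply/eqP => c0; move: cc; rewrite c0 mulr0 => /eqP; rewrite eq_sym oner_eq0.
move: Hrel; rewrite /relL /relR ev_cat /= E mulmx1 mul_scalar_mx mul_mx_scalar.
move=> /(scalerI c0) AB.
rewrite /ev_letter /= in AB.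
by move: NA; rewrite /non_abelian AB eqxx.
Qed.

Lemma sq1 (c : C) : c * c = 1 -> c = 1 \/ c = -1.
Proof.
move=> cc; have : (c - 1) * (c + 1) == 0.
  by apply/eqP; rewrite mulrBl !mulrDr cc mulr1 mul1r; ring.
rewrite mulf_eq0 subr_eq0 addr_eq0 => /orP[] /eqP; by [left|right].
Qed.

End Main.

Unset Implicit Arguments.
Theorem proposition3p4 (R : realType) (k : nat) (n : int) :
  (0 < k)%N -> n != 0 ->
  (* (1) k = 2m *)
  (~~ odd k ->
   forall M y : R[i], is_rep k n M y -> non_abelian M y ->
     chebS ((k./2)%:Z - 1) y * chebS (n - 1) (\tr (ev_word M y (wJ k))) != 0)
  /\
  (* (2) k = 2m+1 >= 3, rho = holonomy representation (discrete faithful) *)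
  (odd k -> (3 <= k)%N ->
   forall M y : R[i], discrete_faithful k n M y ->
     chebS (k./2)%:Z y * chebS ((k./2)%:Z - 1) y != 0).
Proof.
move=> k0 n0; split.
- move=> ev M y rep NA.
  have M0 : M != 0 by case: rep.
  have Ek := odd_double_half k; rewrite (negbTE ev) add0n in Ek.
  have wJe : wJ k = wrep k./2 [:: lb; laI] ++ wrep k./2 [:: lbI; la]
    by rewrite /wJ (negbTE ev).
  have [dc tc] := Xc_ok y M0; have [dd td] := Xd_ok y M0.
  have dW := d2_ev y (wJ k) M0.
  rewrite mulf_eq0 negb_or; apply/andP; split; apply/eqP => S0.
  + move: S0 Ek wJe; case: (k./2) => [|[|i]].
    * by move=> _ Ek; rewrite -Ek in k0.
    * by rewrite subrr /= => /eqP; rewrite oner_eq0.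
    * rewrite -(addn1 i.+1) PoszD addrK => S0 _ wJe.
      have [Ec cc] := pow2_scalar dc (etrans (congr1 _ tc) S0).
      have [Ed _] := pow2_scalar dd (etrans (congr1 _ td) S0).
      rewrite tc in Ec; rewrite td in Ed.
      have W1 : ev_word M y (wJ k) = 1%:M.
        by rewrite wJe ev_cat !ev_wrep !addn1 Ec Ed -scalar_mxM -tc cc.
      apply: (@rel_contra _ k n M y 1 rep NA _ (mulr1 _)).
      case: n {n0 rep} => j /=; rewrite ev_wrep.
      - by rewrite W1 idmxE expr1n.
      - have := ev_winv y (wJ k) M0; rewrite W1 mulmx1 => ->.
        by rewrite idmxE expr1n.
  + set W := ev_word M y (wJ k) in S0 dW.
    case: n n0 rep S0 => j /=.
    * case: j => [|[|i]] // _ rep.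
      - by rewrite subrr /= => /eqP; rewrite oner_eq0.
      - rewrite -(addn1 i.+1) PoszD addrK => S0.
        have [EW cc] := pow2_scalar dW S0.
        by apply: (rel_contra rep NA _ cc); rewrite /= ev_wrep.
    * move=> _ rep.
      rewrite addn0 => /eqP; rewrite oppr_eq0 => /eqP.
      case: j rep => [|i] rep; first by move=> /eqP; rewrite oner_eq0.
      move=> S0.
      have [dV tV] := inv_ok dW (ev_winv y (wJ k) M0).
      rewrite -tV in S0.
      have [EV cc] := pow2_scalar dV S0.
      by apply: (rel_contra rep NA _ cc); rewrite /= ev_wrep.
- move=> od k3 M y [[M0 Hrel] [_ F]].
  have Ek := odd_double_half k; rewrite od /= in Ek.
  have [dc tc] := Xc_ok y M0.
  have key : forall N (c : R[i]), (1 <= N <= k./2 + 1)%N ->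
      ev_word M y (wrep N [:: lb; laI]) = c%:M -> c * c = 1 -> False.
    move=> N c HN E cc.
    have Fu : in_normal_closure (relator k n) (wrep N [:: lb; laI]).
      apply: F; rewrite E; case: (sq1 cc) => ->; [left|right] => //.
      by rewrite !mx2_scalar mx2_opp oppr0.
    have [j Ej] := dev_normal Fu.
    have : dev (wrep N [:: lb; laI]) = (1, N%:Z * 1) by apply: dev_wrep.
    rewrite Ej mulr1 => -[EN].
    apply: (@arith_contra N n j k./2 k _ n0 _ HN (esym EN)).
    + by move: k3; rewrite -Ek; case: (k./2).
    + by rewrite -{1}Ek -muln2; lia.
  rewrite mulf_eq0 negb_or; apply/andP; split; apply/eqP => S0.
  + move: S0 key Ek k3; case: (k./2) => [|i]; first by move=> _ _ <-.
    move=> S0 key _ _.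
    have [E cc] := pow2_scalar dc (etrans (congr1 _ tc) S0).
    apply: (key i.+2 _ _ _ cc); last by rewrite ev_wrep.
    by rewrite addn1 leqnn.
  + move: S0 key Ek k3; case: (k./2) => [|[|i]]; first by move=> _ _ <-.
    * by rewrite subrr /= => /eqP; rewrite oner_eq0.
    * rewrite -(addn1 i.+1) PoszD addrK => S0 key _ _.
      have [E cc] := pow2_scalar dc (etrans (congr1 _ tc) S0).
      apply: (key i.+2 _ _ _ cc); last by rewrite ev_wrep.
      lia.
Qed.
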